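(* Let $S=\begin{pmatrix}A&B\\C&D\end{pmatrix}\in\mathrm{Sp}(d,\mathbb R)$. Then $\mathbb R^d=\ker(B)^\perp\oplus D^TA(\ker(B))$.
   Context: $\mathrm{Sp}(d,\mathbb R)$ is the group of real $2d\times 2d$ matrices $S$ with $S^TJS=J$, $J=\begin{pmatrix}0_d&I_d\\-I_d&0_d\end{pmatrix}$, written in $d\times d$ blocks $A,B,C,D$. $\ker(B)^\perp$ is the orthogonal complement of the kernel of $B$ for the standard inner product; $\oplus$ denotes a (not necessarily orthogonal) direct sum. *)

(* Defs.v *)
(* Vectors of R^n are represented as row vectors 'rV_n, and
   subspaces as row spaces of matrices (mxalgebra, scope %MS). *)
From HB Require Import structures.
From mathcomp Require Import all_boot all_order all_algebra.
Set Implicit Arguments. Unset Strict Implicit. Unset Printing Implicit Defensive.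
Import Order.TTheory GRing.Theory Num.Theory.
Local Open Scope ring_scope.

Definition Jmx (R : ringType) (d : nat) : 'M[R]_(d + d) :=
  block_mx 0 1%:M (- 1%:M) 0.

Definition symplectic (R : comRingType) (d : nat) (S : 'M[R]_(d + d)) : Prop :=
  S^T *m Jmx R d *m S = Jmx R d.

(* ker M = { x | M x = 0 } (x a column vector), as a row space:
   x^T M^T = 0. *)
Definition kerc (R : fieldType) (m n : nat) (M : 'M[R]_(m, n)) : 'M[R]_n :=
  kermx M^T.

(* Orthogonal complement (standard inner product) of the row space of V:
   the u with <u, v> = 0 for all rows v of V, i.e. u *m V^T = 0. *)
Definition orthc (R : fieldType) (k n : nat) (V : 'M[R]_(k, n)) : 'M[R]_n :=
  kermx V^T.

(* Image M(V) of the subspace V (row space) under x |-> M x. *)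
Definition imgc (R : fieldType) (k m n : nat) (M : 'M[R]_(n, m))
  (V : 'M[R]_(k, m)) : 'M[R]_(k, n) := V *m M^T.

(* Main.v *)
Require Import Defs.
From HB Require Import structures.
From mathcomp Require Import all_boot all_order all_algebra.
From mathcomp Require Import zify.
Import Order.TTheory GRing.Theory Num.Theory.
Local Open Scope ring_scope.

Lemma symp_id (R : comRingType) d (A B C D : 'M[R]_d) :
  symplectic (block_mx A B C D) -> A^T *m D - C^T *m B = 1%:M.
Proof.
rewrite /symplectic /Jmx tr_block_mx !mulmx_block => /eq_block_mx [_ H _ _].
move: H; rewrite ?mulmx0 ?mul0mx ?mulmx1 ?mulmxN ?mulmx1 ?add0r ?addr0 ?mulNmx ?mul1mx.
by rewrite addrC.
Qed.

Lemma ortho_cap (R : realFieldType) d (K : 'M[R]_d) :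
  (K :&: kermx K^T = 0)%MS.
Proof.
apply/eqP; rewrite -submx0; apply/row_subP => i.
set v := row i _.
have vK : (v <= K)%MS by rewrite (submx_trans (row_sub i _)) ?capmxSl.
have vKp : (v <= kermx K^T)%MS by rewrite (submx_trans (row_sub i _)) ?capmxSr.
rewrite sub_kermx in vKp; clearbody v.
case/submxP: vK => w vw.
have H0 : v *m v^T = 0.
  by rewrite {2}vw trmx_mul mulmxA (eqP vKp) mul0mx.
rewrite submx0; apply/eqP/rowP => j; rewrite mxE.
suff -> : v 0 j = 0 by [].
move/matrixP: H0 => /(_ 0 0); rewrite !mxE => Hs.
have Hp : forall k : 'I_d, true -> 0 <= v 0 k * v^T k 0.
  by move=> k _; rewrite mxE -expr2 sqr_ge0.
have := psumr_eq0P Hp Hs (i:=j) isT.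
by rewrite mxE -expr2 => /eqP; rewrite sqrf_eq0 => /eqP.
Qed.

Theorem lemma3p6 (R : realFieldType) (d : nat) (A B C D : 'M[R]_d) :
  symplectic (block_mx A B C D) ->
  (orthc (kerc B) + imgc (D^T *m A) (kerc B) == 1%:M)%MS /\
  mxdirect (orthc (kerc B) + imgc (D^T *m A) (kerc B)).
Proof.
move=> /symp_id HS.
rewrite /orthc /imgc /kerc.
set K := kermx B^T.
have KB : K *m B^T = 0 by rewrite mulmx_ker.
clearbody K.
have Himg : K *m (D^T *m A)^T = K + K *m C^T *m B.
  have HS' : A^T *m D = 1%:M + C^T *m B by rewrite -HS subrK.
  by rewrite trmx_mul trmxK HS' mulmxDr mulmx1 mulmxA.
have KS : (K <= kermx K^T + K *m (D^T *m A)^T)%MS.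
  have E : K = - (K *m C^T *m B) + K *m (D^T *m A)^T by rewrite Himg addrC addrK.
  rewrite {1}E.
  apply: addmx_sub_adds => //.
  have BK : B *m K^T = 0 by rewrite -[B]trmxK -trmx_mul KB trmx0.
  by rewrite sub_kermx mulNmx -!mulmxA BK !mulmx0 oppr0.
have full : (1%:M <= kermx K^T + K *m (D^T *m A)^T)%MS.
  apply: submx_trans (_ : (K + kermx K^T <= _)%MS).
    rewrite sub1mx /row_full.
    have /mxdirect_addsP : (K :&: kermx K^T = 0)%MS by apply: ortho_cap.
    by rewrite mxdirectE /= => /eqP ->; rewrite mxrank_ker mxrank_tr subnKC ?rank_leq_col.
  by rewrite addsmx_sub KS addsmxSl.
have Heq : (kermx K^T + K *m (D^T *m A)^T == 1%:M)%MS by rewrite /eqmx submx1 full.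
split => //.
rewrite mxdirectE /=.
have r1 : \rank (kermx K^T + K *m (D^T *m A)^T) = d.
  by rewrite (eqmxP Heq) mxrank1.
have := mxrank_adds_leqif (kermx K^T) (K *m (D^T *m A)^T).
move=> [le _]; move: le; rewrite r1 mxrank_ker mxrank_tr.
have := mxrankM_maxl K (D^T *m A)^T.
have := rank_leq_col K.
move: (\rank K) (\rank (K *m (D^T *m A)^T)) => r s h1 h2 h3; apply/eqP; lia.
Qed.
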